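(* Let $G$ be a connected (claw, bull)-free graph and let $C$ be an induced cycle of $G$ of length $k\ge 6$. Then $G$ is an expansion of $C$.
   Context: A claw is a graph isomorphic to $K_{1,3}$; a bull is the graph obtained from a triangle by adding two pendant edges at two different vertices. A graph is (claw, bull)-free if it has no induced claw and no induced bull. An expansion of a graph $F$ with vertex set $\{v_1,\dots,v_n\}$ is any graph obtained from $F$ by replacing each vertex $v_i$ by a nonempty clique $K^{[i]}$, the cliques being pairwise vertex-disjoint, and adding all edges between $V(K^{[i]})$ and $V(K^{[j]})$ whenever $v_iv_j\in E(F)$ (and no other edges between different cliques). *)

(* Defs.v *)
(* Simple graphs: T : finType with symmetric irreflexive e : rel T. *)
From mathcomp Require Import all_boot.
Set Implicit Arguments. Unset Strict Implicit. Unset Printing Implicit Defensive.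

Definition connected (T : finType) (e : rel T) : Prop :=
  forall x y : T, connect e x y.

Definition has_induced (T : finType) (e : rel T) (n : nat) (H : rel 'I_n) : Prop :=
  exists h : 'I_n -> T, injective h /\
    forall i j : 'I_n, i != j -> e (h i) (h j) = H i j.

Definition cyc_adj (k : nat) : rel 'I_k :=
  fun i j => (val j == (val i).+1 %% k) || (val i == (val j).+1 %% k).

Arguments cyc_adj k : clear implicits.

(* The claw K_{1,3}: centre 0, leaves 1,2,3. *)
Definition claw_adj : rel 'I_4 :=
  fun i j => (val i == 0) != (val j == 0).

(* The bull: triangle 0,1,2 with pendant 3 at 0 and pendant 4 at 1. *)
Definition bull_edges : seq (nat * nat) :=
  [:: (0, 1); (1, 2); (0, 2); (0, 3); (1, 4)].
Definition bull_adj : rel 'I_5 :=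
  fun i j => ((val i, val j) \in bull_edges) || ((val j, val i) \in bull_edges).

(* G is an expansion of the graph F on 'I_n: V(G) is partitioned into the
   nonempty cliques K_i = f^-1(i), with x in K_i, y in K_j (i != j) adjacent
   exactly when F i j. *)
Definition is_expansion (T : finType) (e : rel T) (n : nat) (F : rel 'I_n) : Prop :=
  exists f : T -> 'I_n,
    (forall i : 'I_n, exists x : T, f x = i) /\
    (forall x y : T, x != y -> e x y = (f x == f y) || F (f x) (f y)).

(* Main.v *)
Require Import Defs.
From mathcomp Require Import all_boot zify.

Lemma claw_of (T : finType) (e : rel T) (x0 x1 x2 x3 : T) :
  symmetric e ->
  x0 != x1 -> x0 != x2 -> x0 != x3 -> x1 != x2 -> x1 != x3 -> x2 != x3 ->
  e x0 x1 -> e x0 x2 -> e x0 x3 -> ~~ e x1 x2 -> ~~ e x1 x3 -> ~~ e x2 x3 ->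
  has_induced e claw_adj.
Proof.
move=> es d01 d02 d03 d12 d13 d23 a01 a02 a03 n12 n13 n23.
exists (fun i : 'I_4 => nth x0 [:: x0; x1; x2; x3] i); split.
  move=> [[|[|[|[|i]]]] Hi] [[|[|[|[|j]]]] Hj] //= H;
  first [ by apply: val_inj | by rewrite H eqxx in d01 d02 d03 d12 d13 d23
        | by rewrite -H eqxx in d01 d02 d03 d12 d13 d23 ].
move=> [[|[|[|[|i]]]] Hi] [[|[|[|[|j]]]] Hj] //= Hne; rewrite /claw_adj /=;
first [ by [] | by rewrite es | by apply/negbTE | by apply/negbTE; rewrite es ].
Qed.

Lemma bull_of (T : finType) (e : rel T) (x0 x1 x2 x3 x4 : T) :
  symmetric e ->
  x0 != x1 -> x0 != x2 -> x0 != x3 -> x0 != x4 -> x1 != x2 -> x1 != x3 -> x1 != x4 ->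
  x2 != x3 -> x2 != x4 -> x3 != x4 ->
  e x0 x1 -> e x1 x2 -> e x0 x2 -> e x0 x3 -> e x1 x4 ->
  ~~ e x0 x4 -> ~~ e x1 x3 -> ~~ e x2 x3 -> ~~ e x2 x4 -> ~~ e x3 x4 ->
  has_induced e bull_adj.
Proof.
move=> es d01 d02 d03 d04 d12 d13 d14 d23 d24 d34 a01 a12 a02 a03 a14 n04 n13 n23 n24 n34.
exists (fun i : 'I_5 => nth x0 [:: x0; x1; x2; x3; x4] i); split.
  move=> [[|[|[|[|[|i]]]]] Hi] [[|[|[|[|[|j]]]]] Hj] //= H;
  first [ by apply: val_inj | by rewrite H eqxx in d01 d02 d03 d04 d12 d13 d14 d23 d24 d34
        | by rewrite -H eqxx in d01 d02 d03 d04 d12 d13 d14 d23 d24 d34 ].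
move=> [[|[|[|[|[|i]]]]] Hi] [[|[|[|[|[|j]]]]] Hj] //= Hne; rewrite /bull_adj /=;
first [ by [] | by rewrite es | by apply/negbTE | by apply/negbTE; rewrite es ].
Qed.

Lemma cycE k (i j : 'I_k) : cyc_adj k i j = [|| (j:nat) == i + 1, (i:nat) == j + 1, ((i:nat) == 0) && ((j:nat) == k.-1) | ((j:nat) == 0) && ((i:nat) == k.-1)].
Proof.
have hi := ltn_ord i; have hj := ltn_ord j; rewrite /cyc_adj /=.
case: (ltnP i.+1 k) => Hi; [rewrite (modn_small Hi)| (have -> : i.+1 = k by lia); rewrite modnn];
(case: (ltnP j.+1 k) => Hj; [rewrite (modn_small Hj)| (have -> : j.+1 = k by lia); rewrite modnn]); lia.
Qed.

Lemma ordE k (a b : 'I_k) : (a == b) = ((a:nat) == (b:nat)). Proof. by []. Qed.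

Lemma ordSE {k} (a : 'I_k) : ((ordS a : nat) = a.+1 /\ a.+1 < k) \/ ((ordS a : nat) = 0 /\ a.+1 = k).
Proof.
have ha := ltn_ord a; rewrite /=.
have [H|H] : a.+1 < k \/ a.+1 = k by lia.
  by left; rewrite modn_small.
by right; rewrite H modnn.
Qed.

Lemma ordPE {k} (a : 'I_k) : ((ord_pred a : nat) = a.-1 /\ 0 < a) \/ ((ord_pred a : nat) = k.-1 /\ (a : nat) = 0).
Proof. have := ordSE (ord_pred a); rewrite ord_predK; have := ltn_ord (ord_pred a); have := ltn_ord a; lia. Qed.

Lemma cycS k (a b : 'I_k) : cyc_adj k a b = (b == ordS a) || (a == ordS b).
Proof. by []. Qed.

Lemma cyc_sym k (a b : 'I_k) : cyc_adj k a b = cyc_adj k b a.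
Proof. by rewrite /cyc_adj orbC. Qed.

Ltac gen_facts :=
  repeat match goal with
  | |- context [@nat_of_ord ?k (@ordS _ ?x)] =>
      move: (ordSE x); generalize (@nat_of_ord k (ordS x))
  | |- context [@nat_of_ord ?k (@ord_pred _ ?x)] =>
      move: (ordPE x); generalize (@nat_of_ord k (ord_pred x))
  end;
  repeat match goal with
  | |- context [@nat_of_ord ?k ?x] => move: (ltn_ord x); generalize (@nat_of_ord k x)
  end.
Ltac ar :=
  repeat match goal with H : context [nat_of_ord _] |- _ => revert H end;
  rewrite ?cycE ?ordE; gen_facts; match goal with H : is_true (6 <= _) |- _ => clear -H end; intros; lia.
Ltac side e h v hv hn hvn ea na es :=
  match goal with
  | |- symmetric _ => exact: es
  | |- is_true (h ?a != v) => apply: hvn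
  | |- is_true (v != h ?a) => apply: hv
  | |- is_true (h ?a != h ?b) => apply: hn; first [done | by rewrite eq_sym | ar]
  | |- is_true (e (h ?a) (h ?b)) => apply: ea; ar
  | |- is_true (~~ e (h ?a) (h ?b)) =>
      apply: na; first [done | by rewrite eq_sym | by rewrite cyc_sym | ar]
  | |- is_true (e v _) => done
  | |- is_true (e _ v) => by rewrite es
  | |- is_true (~~ e v _) => done
  | |- is_true (~~ e _ v) => by rewrite es
  end.

Lemma clone_lemma (T : finType) (e : rel T) k (h : 'I_k -> T) v i0 :
  symmetric e -> ~ has_induced e claw_adj -> ~ has_induced e bull_adj -> 6 <= k ->
  injective h -> (forall i j, i != j -> e (h i) (h j) = cyc_adj k i j) ->
  (forall j, v != h j) -> e v (h i0) ->
  exists m, forall j, e v (h j) = (j == m) || cyc_adj k m j.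
Proof.
move=> es nc nb hk hinj hind hv S0.
have hn : forall a b, a != b -> h a != h b by move=> a b; rewrite (inj_eq hinj).
have hvn : forall a, h a != v by move=> a; rewrite eq_sym.
have ea : forall a b, cyc_adj k a b -> e (h a) (h b).
  move=> a b ab; rewrite hind //; apply/eqP=> E; subst; move: ab; rewrite cycE; lia.
have na : forall a b, a != b -> ~~ cyc_adj k a b -> ~~ e (h a) (h b).
  by move=> a b ab; rewrite hind.
have F2 : forall a, e v (h a) -> e v (h (ord_pred a)) \/ e v (h (ordS a)).
  move=> a Sa. have [Sp|Sp] := boolP (e v (h (ord_pred a))); first by left.
  have [Ss|Ss] := boolP (e v (h (ordS a))); first by right.
  exfalso; apply: nc.
  apply: (@claw_of _ e (h a) v (h (ord_pred a)) (h (ordS a))); side e h v hv hn hvn ea na es.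
have F3 : forall a, e v (h a) -> e v (h (ordS a)) ->
    e v (h (ord_pred a)) \/ e v (h (ordS (ordS a))).
  move=> a S1 S2. have [Sp|Sp] := boolP (e v (h (ord_pred a))); first by left.
  have [Ss|Ss] := boolP (e v (h (ordS (ordS a)))); first by right.
  exfalso; apply: nb.
  apply: (@bull_of _ e (h a) (h (ordS a)) v (h (ord_pred a)) (h (ordS (ordS a))));
    side e h v hv hn hvn ea na es.
have F4 : forall c, e v (h c) -> e v (h (ordS c)) -> e v (h (ordS (ordS c))) ->
    e v (h (ordS (ordS (ordS c)))) -> False.
  move=> c S1 S2 S3 S4.
  have [S5|S5] := boolP (e v (h (ordS (ordS (ordS (ordS c)))))).
    apply: nc.
    apply: (@claw_of _ e v (h c) (h (ordS (ordS c))) (h (ordS (ordS (ordS (ordS c))))));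
      side e h v hv hn hvn ea na es.
  apply: nb.
  apply: (@bull_of _ e v (h (ordS (ordS (ordS c)))) (h (ordS (ordS c))) (h c)
     (h (ordS (ordS (ordS (ordS c))))));
      side e h v hv hn hvn ea na es.
have [a [Sa Sa1]] : exists a, e v (h a) /\ e v (h (ordS a)).
  case: (F2 i0 S0) => H; [exists (ord_pred i0); rewrite ord_predK | exists i0]; done.
have [b [Sb [Sb1 Sb2]]] : exists b, e v (h b) /\ e v (h (ordS b)) /\ e v (h (ordS (ordS b))).
  case: (F3 a Sa Sa1) => H; [exists (ord_pred a); rewrite ord_predK | exists a]; done.
exists (ordS b) => j.
have [Hj|Hj] := boolP ((j == b) || (j == ordS b) || (j == ordS (ordS b))).
  move: Hj => /orP [/orP [] | ] /eqP ->; rewrite ?Sb ?Sb1 ?Sb2; symmetry; ar.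
have -> : (j == ordS b) || cyc_adj k (ordS b) j = false by move: Hj; ar.
apply/negbTE/negP => Sj.
have /norP [/norP [Hjb Hjsb] Hjssb] := Hj.
have [Hc|Hc] := boolP (cyc_adj k b j || cyc_adj k (ordS (ordS b)) j).
  case/orP: Hc; rewrite cycS => /orP [] /eqP E.
  - by rewrite E eqxx in Hjsb.
  - by apply: (F4 j); rewrite -?E.
  - by subst j; apply: (F4 b).
  - by move/ordS_inj: E => E; rewrite E eqxx in Hjsb.
have /norP [Hbj Hssbj] := Hc.
apply: nc.
apply: (@claw_of _ e v (h b) (h (ordS (ordS b))) (h j)); side e h v hv hn hvn ea na es.
Qed.

Definition Nb k (m l : 'I_k) := (l == m) || cyc_adj k m l.
Arguments Nb {k}.

Definition Qb (T : finType) (e : rel T) k (h : 'I_k -> T) (v : T) (m : 'I_k) : bool :=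
  ((v == h m) || e v (h m)) && [forall j, (j != m) ==> (e v (h j) == cyc_adj k m j)].
Arguments Qb {T} e {k} h v m.

Lemma QP (T : finType) (e : rel T) k (h : 'I_k -> T) v m :
  Qb e h v m -> (v = h m \/ e v (h m)) /\ (forall j, j != m -> e v (h j) = cyc_adj k m j).
Proof.
case/andP=> /orP H1 /forallP H2; split; first by case: H1 => [/eqP|]; [left|right].
by move=> j jm; apply/eqP; move: (H2 j); rewrite jm.
Qed.

Lemma QI (T : finType) (e : rel T) k (h : 'I_k -> T) v m :
  (v = h m \/ e v (h m)) -> (forall j, j != m -> e v (h j) = cyc_adj k m j) -> Qb e h v m.
Proof.
move=> H1 H2; apply/andP; split.
  by case: H1 => [->|->]; rewrite ?eqxx ?orbT.
by apply/forallP=> j; apply/implyP=> jm; rewrite H2.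
Qed.

Lemma Q_range (T : finType) (e : rel T) k (h : 'I_k -> T) m :
  (forall i j, i != j -> e (h i) (h j) = cyc_adj k i j) -> Qb e h (h m) m.
Proof. by move=> hind; apply: QI; [left | move=> j jm; rewrite hind // eq_sym]. Qed.

Lemma Q_clone (T : finType) (e : rel T) k (h : 'I_k -> T) v m :
  (forall j, e v (h j) = (j == m) || cyc_adj k m j) -> Qb e h v m.
Proof.
move=> H; apply: QI; first by right; rewrite H eqxx.
by move=> j jm; rewrite H (negbTE jm).
Qed.

Lemma Q_uniq (T : finType) (e : rel T) k (h : 'I_k -> T) v m m' :
  6 <= k -> Qb e h v m -> Qb e h v m' -> m = m'.
Proof.
move=> hk /QP [_ H] /QP [_ H'].
apply/eqP; apply/negP => /negP mm.
have [C|C] := boolP ((m' == ordS m) || cyc_adj k m' (ordS m)).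
  have l1 : ord_pred m != m by ar.
  have l2 : ord_pred m != m' by move: C mm; ar.
  have := H _ l1; rewrite H' //.
  have -> : cyc_adj k m (ord_pred m) = true by ar.
  have -> : cyc_adj k m' (ord_pred m) = false by move: C mm; ar.
  by [].
have /norP [C1 C2] := C.
have l1 : ordS m != m by ar.
have := H _ l1; rewrite H'; last by rewrite eq_sym.
rewrite (negbTE C2).
have -> : cyc_adj k m (ordS m) = true by ar.
by [].
Qed.

Lemma adj_key k (m j : 'I_k) : 6 <= k -> m != j ->
  exists l1 l2, [/\ l1 != l2, Nb m l1 != Nb j l1 & Nb m l2 != Nb j l2].
Proof.
move=> hk mj; rewrite /Nb.
have [C|C] := boolP (cyc_adj k m j).
  move: C; rewrite cycS => /orP [/eqP Ej | /eqP Em].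
    by subst j; exists (ord_pred m), (ordS (ordS m)); split; ar.
  by subst m; exists (ordS (ordS j)), (ord_pred j); split; ar.
by exists m, j; split; move: mj C; ar.
Qed.

Lemma adj_ext k (i m j : 'I_k) : 6 <= k ->
  (forall l, l != i -> Nb m l = Nb j l) -> m = j.
Proof.
move=> hk H; apply/eqP; apply/negP => /negP mj.
have [l1 [l2 [l12 d1 d2]]] := @adj_key k m j hk mj.
case: (eqVneq l1 i) => [E|n1].
  subst l1. by move: d2; rewrite H ?eqxx // eq_sym.
by move: d1; rewrite H ?eqxx.
Qed.

Definition upd (T : Type) k (h : 'I_k -> T) (i : 'I_k) (u : T) (j : 'I_k) :=
  if j == i then u else h j.
Arguments upd {T k}.

Lemma upd_ind (T : finType) (e : rel T) k (h : 'I_k -> T) i u :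
  symmetric e -> injective h ->
  (forall i j, i != j -> e (h i) (h j) = cyc_adj k i j) ->
  (forall j, u != h j) -> Qb e h u i ->
  injective (upd h i u) /\
  (forall a b, a != b -> e (upd h i u a) (upd h i u b) = cyc_adj k a b).
Proof.
move=> es hinj hind hu /QP [_ Q2]; split.
  move=> a b; rewrite /upd.
  case: (eqVneq a i) => [->|ai]; case: (eqVneq b i) => [->|bi] //.
  - by move=> E; move: (hu b); rewrite E eqxx.
  - by move=> E; move: (hu a); rewrite E eqxx.
  - exact: hinj.
move=> a b ab; rewrite /upd.
case: (eqVneq a i) => [Ea|ai]; case: (eqVneq b i) => [Eb|bi].
- by subst; rewrite eqxx in ab.
- by subst; rewrite Q2.
- by subst; rewrite es Q2 // cyc_sym.
- by rewrite hind.
Qed.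
Arguments clone_lemma {T e k h v i0}.
Arguments upd_ind {T e k h i u}.
Arguments Q_uniq {T e k h v m m'}.
Arguments QP {T e k h v m}.

Lemma step (T : finType) (e : rel T) k (h : 'I_k -> T) u w i :
  symmetric e -> irreflexive e -> ~ has_induced e claw_adj -> ~ has_induced e bull_adj ->
  6 <= k -> injective h ->
  (forall i j, i != j -> e (h i) (h j) = cyc_adj k i j) ->
  Qb e h u i -> e u w -> exists m, Qb e h w m.
Proof.
move=> es ei nc nb hk hinj hind Qu uw.
case: (pickP (fun l => w == h l)) => [l /eqP -> | nw].
  by exists l; apply: Q_range.
have hw : forall l, w != h l by move=> l; rewrite nw.
case: (pickP (fun l => e w (h l))) => [l wl | nadj].
  have [m Hm] := clone_lemma es nc nb hk hinj hind hw wl.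
  by exists m; apply: Q_clone.
exfalso.
case: (pickP (fun l => u == h l)) => [l /eqP Eu | nu].
  by move: (nadj l); rewrite -Eu es uw.
have hu : forall l, u != h l by move=> l; rewrite nu.
have [hinj' hind'] := upd_ind es hinj hind hu Qu.
have hw' : forall l, w != upd h i u l.
  move=> l; rewrite /upd; case: (l == i) => //.
  by apply/eqP => E; move: uw; rewrite E ei.
have wi : e w (upd h i u i) by rewrite /upd eqxx es.
have [m Hm] := clone_lemma es nc nb hk hinj' hind' hw' wi.
have [E|E] := eqVneq (ordS m) i.
  have pi : ord_pred m != i by rewrite -E; ar.
  move: (Hm (ord_pred m)); rewrite /upd (negbTE pi) nadj.
  have -> : cyc_adj k m (ord_pred m) = true by ar.
  by rewrite orbT.
move: (Hm (ordS m)); rewrite /upd (negbTE E) nadj.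
have -> : cyc_adj k m (ordS m) = true by ar.
by rewrite orbT.
Qed.
Arguments step {T e k h u w i}.

Lemma R1 (T : finType) (e : rel T) k (h : 'I_k -> T) x i l :
  Qb e h x i -> x != h l -> e x (h l) = (i == l) || cyc_adj k i l.
Proof.
move=> /QP [Q1 Q2] xl.
case: (eqVneq i l) => [E|il] /=.
  subst l; case: Q1 => [E|->] //; by rewrite E eqxx in xl.
by rewrite Q2 // eq_sym.
Qed.
Arguments R1 {T e k h x i l}.

Lemma R2 (T : finType) (e : rel T) k (h : 'I_k -> T) x y i j :
  symmetric e -> irreflexive e -> ~ has_induced e claw_adj -> ~ has_induced e bull_adj ->
  6 <= k -> injective h ->
  (forall i j, i != j -> e (h i) (h j) = cyc_adj k i j) ->
  (forall l, x != h l) -> (forall l, y != h l) -> x != y ->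
  Qb e h x i -> Qb e h y j -> e x y = (i == j) || cyc_adj k i j.
Proof.
move=> es ei nc nb hk hinj hind hx hy xy Qx Qy.
have [hinj' hind'] := upd_ind es hinj hind hx Qx.
have hy' : forall l, y != upd h i x l.
  by move=> l; rewrite /upd; case: (l == i) => //; rewrite eq_sym.
have [Y1 Y2] := QP Qy.
have yj : e y (h j) by case: Y1 => // E; move: (hy j); rewrite E eqxx.
have [l yl] : exists l, e y (upd h i x l).
  case: (eqVneq j i) => [E|ji].
    exists (ordS j); rewrite /upd.
    have -> : (ordS j == i) = false by rewrite -E; apply/negbTE; ar.
    rewrite Y2; [ar | ar].
  by exists j; rewrite /upd (negbTE ji).
have [m Hm] := clone_lemma es nc nb hk hinj' hind' hy' yl.
have Emj : m = j.
  apply: (@adj_ext k i) => // l0 li.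
  rewrite /Nb -Hm /upd (negbTE li).
  case: (eqVneq l0 j) => [->|lj]; first by rewrite yj ?eqxx.
  by rewrite Y2.
subst m.
move: (Hm i); rewrite /upd eqxx es => ->.
by rewrite eq_sym cyc_sym.
Qed.
Arguments R2 {T e k h x y i j}.

Theorem lemma4 (T : finType) (e : rel T) (k : nat) :
  symmetric e -> irreflexive e -> connected e ->
  ~ has_induced e claw_adj -> ~ has_induced e bull_adj ->
  6 <= k -> has_induced e (cyc_adj k) ->
  is_expansion e (cyc_adj k).
Proof.
move=> es ei con nc nb hk [h [hinj hind]].
have k0 : 0 < k by apply: leq_trans hk.
have Aall : forall v, exists m, Qb e h v m.
  move=> v; have := con (h (Ordinal k0)) v.
  case/connectP => p pth ->.
  have : exists m, Qb e h (h (Ordinal k0)) m by exists (Ordinal k0); apply: Q_range.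
  elim: p (h (Ordinal k0)) pth => [|y p IH] x //= /andP [xy pth] [m Qm].
  apply: IH pth _.
  exact: (step es ei nc nb hk hinj hind Qm xy).
exists (fun v => xchoose (Aall v)); split.
  move=> i; exists (h i).
  apply: (Q_uniq hk (xchooseP (Aall (h i)))).
  exact: Q_range.
move=> x y xy.
have Qx := xchooseP (Aall x); have Qy := xchooseP (Aall y).
move: (xchoose (Aall x)) (xchoose (Aall y)) Qx Qy => i j Qx Qy.
case: (pickP (fun l => y == h l)) => [l /eqP Ey | ny].
  have Ej : j = l by apply: (Q_uniq hk Qy); rewrite Ey; apply: Q_range.
  subst j; rewrite Ey in xy *; exact: R1 Qx xy.
case: (pickP (fun l => x == h l)) => [l /eqP Ex | nx].
  have Ei : i = l by apply: (Q_uniq hk Qx); rewrite Ex; apply: Q_range.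
  subst i; rewrite Ex in xy *; rewrite es eq_sym cyc_sym.
  by apply: R1 Qy _; rewrite eq_sym.
apply: (R2 es ei nc nb hk hinj hind _ _ xy Qx Qy).
  by move=> l; rewrite nx.
by move=> l; rewrite ny.
Qed.
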